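(* Let $\mathscr{X},\mathscr{Y},\mathscr{Z}$ be real Banach spaces with duals $\mathscr{X}^*,\mathscr{Y}^*,\mathscr{Z}^*$, let $A:\mathscr{X}\to\mathscr{Y}$ and $B:\mathscr{X}\to\mathscr{Z}$ be bounded linear operators with adjoints $A^*,B^*$, let $\mathbf{y}_0\in\mathscr{Y}$ and $\rho>0$. Then $$\inf\{\|\mathbf{y}_0-A\mathbf{x}\|_{\mathscr{Y}}+\rho\|B\mathbf{x}\|_{\mathscr{Z}}:\mathbf{x}\in\mathscr{X}\}=\sup\{|\langle\mathbf{y}_0,\lambda\rangle_{\mathscr{Y}}|:\ \lambda\in\mathscr{Y}^*,\ \mu\in\mathscr{Z}^*,\ \max\{\|\lambda\|_{\mathscr{Y}^*},\|\mu\|_{\mathscr{Z}^*}\}\le1,\ A^*\lambda+\rho B^*\mu=0\}.$$ Moreover, if $p,p'\in(1,+\infty)$ with $1/p+1/p'=1$, then $$\inf\{(\|\mathbf{y}_0-A\mathbf{x}\|^p_{\mathscr{Y}}+\rho\|B\mathbf{x}\|^p_{\mathscr{Z}})^{1/p}:\mathbf{x}\in\mathscr{X}\}=\sup\{|\langle\mathbf{y}_0,\lambda\rangle_{\mathscr{Y}}|:\ \lambda\in\mathscr{Y}^*,\ \mu\in\mathscr{Z}^*,\ (\|\lambda\|^{p'}_{\mathscr{Y}^*}+\|\mu\|^{p'}_{\mathscr{Z}^*})^{1/p'}\le1,\ A^*\lambda+\rho^{1/p}B^*\mu=0\}.$$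
   Context: $\langle\mathbf{y},\lambda\rangle_{\mathscr{Y}}:=\lambda(\mathbf{y})$ for $\mathbf{y}\in\mathscr{Y}$, $\lambda\in\mathscr{Y}^*$. *)

(* Defs.v *)
From HB Require Import structures.
From mathcomp Require Import all_boot all_order all_algebra.
From mathcomp Require Import all_classical all_reals all_analysis.
Set Implicit Arguments. Unset Strict Implicit. Unset Printing Implicit Defensive.
Import Order.TTheory GRing.Theory Num.Theory.
Import numFieldNormedType.Exports.
Local Open Scope classical_set_scope.
Local Open Scope ring_scope.

Definition dual_norm (R : realType) (Y : normedModType R) (l : Y -> R) : R :=
  sup [set `|l y| | y in [set y : Y | `|y| <= 1]].

Definition is_dual (R : realType) (Y : normedModType R) (l : {linear Y -> R^o}) : Prop :=
  continuous l.

(* Main.v *)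
Require Import Defs.
From HB Require Import structures.
From mathcomp Require Import all_boot all_order all_algebra.
From mathcomp Require Import all_classical all_reals all_analysis.
Import Order.TTheory GRing.Theory Num.Theory.
Import numFieldNormedType.Exports.
Local Open Scope classical_set_scope.
Local Open Scope ring_scope.
From mathcomp Require Import ring lra.
Set Implicit Arguments. Unset Strict Implicit.

Set Implicit Arguments. Unset Strict Implicit.

Section HahnBanach.
Variables (R : realType) (V : lmodType R) (q : V -> R).
Hypothesis qD : forall a b, q (a + b) <= q a + q b.
Hypothesis qZ : forall (t : R) a, q (t *: a) = `|t| * q a.

Lemma q0 : q 0 = 0.
Proof. by rewrite -(scale0r (0 : V)) qZ normr0 mul0r. Qed.

Lemma q_ge0 a : 0 <= q a.
Proof.
have := qD a ((-1) *: a); rewrite qZ scaleN1r subrr q0 normrN normr1 mul1r.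
by move=> h; rewrite -(@pmulr_rge0 _ 2) // mulr2n mulrDl !mul1r.
Qed.

Definition good (G : set (V * R)) :=
  [/\ G (0, 0),
      (forall a b, G a -> G b -> G (a.1 + b.1, a.2 + b.2)),
      (forall (t : R) a, G a -> G (t *: a.1, t * a.2)) &
      (forall a, G a -> a.2 <= q a.1)].

Lemma good_uniq G v r r' : good G -> G (v, r) -> G (v, r') -> r = r'.
Proof.
move=> [G0 GD GZ Gq] h1 h2.
have h3 := GZ (-1) _ h2; rewrite /= scaleN1r mulN1r in h3.
have h4 := GD _ _ h1 h3; rewrite /= subrr in h4.
have h5 := GZ (-1) _ h4; rewrite /= scaleN1r oppr0 mulN1r in h5.
have := Gq _ h4; have := Gq _ h5; rewrite /= q0.
by move=> a b; apply/eqP; rewrite -subr_eq0 eq_le b /= -oppr_le0.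
Qed.

Lemma hahn_banach (G0 : set (V * R)) : good G0 ->
  exists f : V -> R, [/\ (forall a b, f (a + b) = f a + f b),
     (forall (t : R) a, f (t *: a) = t * f a),
     (forall v, f v <= q v) & (forall a, G0 a -> f a.1 = a.2)].
Proof.
move=> gG0.
pose P (G : set (V * R)) := G = set0 \/ (good G /\ G0 `<=` G).
have Pne G a : P G -> G a -> good G /\ G0 `<=` G.
  by case=> // ->.
have [A [PA Amax]] : exists A, P A /\ forall B, A `<` B -> ~ P B.
  apply: Zorn_bigcup => F FP Ftot.
  have [[G1 FG1 [a1 G1a]]|nF] := pselect (exists2 G, F G & G !=set0); last first.
    left; apply/seteqP; split => // a [G FG Ga]; apply: nF; exists G => //.
    by exists a.
  have [gG1 G01] := Pne _ _ (FP _ FG1) G1a.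
  right; split; last by move=> x /G01 ?; exists G1.
  split.
  - by exists G1 => //; case: gG1.
  - move=> a b [Ga FGa aa] [Gb FGb bb].
    have [ab|ba] := Ftot _ _ FGa FGb.
    + have [[_ GD _ _] _] := Pne _ _ (FP _ FGb) bb.
      by exists Gb => //; apply: GD => //; apply: ab.
    + have [[_ GD _ _] _] := Pne _ _ (FP _ FGa) aa.
      by exists Ga => //; apply: GD => //; apply: ba.
  - move=> t a [Ga FGa aa]; have [[_ _ GZ _] _] := Pne _ _ (FP _ FGa) aa.
    by exists Ga => //; apply: GZ.
  - move=> a [Ga FGa aa]; have [[_ _ _ Gq] _] := Pne _ _ (FP _ FGa) aa.
    exact: Gq.
have [gA G0A] : good A /\ G0 `<=` A.
  case: PA => // A0; exfalso; apply: (Amax G0); last by right; split.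
  rewrite A0; split; first by move=> ?.
  by move=> h; have := h (0, 0); case: gG0 => + _ _ _ => /[swap] /[apply].
have uA v r r' := @good_uniq A v r r' gA.
case: (gA) => A0 AD AZ Aq.
have total v : exists r, A (v, r).
  apply: contrapT => nv.
  pose S := [set x.2 - q (x.1 - v) | x in A].
  have Sne : S !=set0 by exists (0 - q (0 - v)); exists (0, 0).
  have Sub w s : A (w, s) -> ubound S (q (w + v) - s).
    move=> Aws _ [x Ax <-].
    suff : x.2 + s <= q (x.1 - v) + q (w + v) by lra.
    apply: (le_trans (Aq _ (AD _ _ Ax Aws))) => /=.
    have -> : x.1 + w = (x.1 - v) + (w + v) by rewrite addrACA addNr addr0.
    exact: qD.
  pose c := sup S.
  have cle w s : A (w, s) -> c <= q (w + v) - s.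
    by move=> Aws; apply: ge_sup => //; exact: Sub.
  have gec x : A x -> x.2 - q (x.1 - v) <= c.
    move=> Ax; apply: ub_le_sup; last by exists x.
    by exists (q (0 + v) - 0); apply: Sub.
  pose A' := [set y | exists x t, A x /\ y = (x.1 + t *: v, x.2 + t * c)].
  apply: (Amax A'); last first.
    right; split; last first.
      move=> x /G0A Ax; exists x, 0; split => //.
      by rewrite scale0r mul0r !addr0; case: x {Ax}.
    split.
    - by exists (0, 0), 0; rewrite scale0r mul0r !addr0.
    - move=> _ _ [x [t [Ax ->]]] [y [s [Ay ->]]].
      exists (x.1 + y.1, x.2 + y.2), (t + s); split; first exact: AD.
      congr (_, _) => /=; first by rewrite scalerDl addrACA.
      by rewrite mulrDl addrACA.
    - move=> k _ [x [t [Ax ->]]].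
      exists (k *: x.1, k * x.2), (k * t); split; first exact: AZ.
      by congr (_, _) => /=; rewrite ?scalerDr ?scalerA ?mulrDr ?mulrA.
    - move=> _ [x [t [Ax ->]]] /=.
      have [t0|t0|t0] := ltgtP 0 t; last first.
        rewrite -t0.
        by rewrite scale0r mul0r !addr0; exact: Aq.
      + pose s := - t.
        have s0 : 0 < s by rewrite /s oppr_gt0.
        have := gec _ (AZ (s^-1) _ Ax); rewrite /=.
        have -> : s^-1 *: x.1 - v = s^-1 *: (x.1 + t *: v).
          have tn0 : t != 0 by rewrite lt_eqF.
          by rewrite scalerDr scalerA /s invrN mulNr mulVf // scaleN1r.
        rewrite qZ gtr0_norm ?invr_gt0 // -mulrBr => h.
        have := ler_wpM2l (ltW s0) h; rewrite mulrA mulfV ?gt_eqF // mul1r.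
        by rewrite /s mulNr lerBlDr -lerBlDl opprK addrC.
      + have := cle _ _ (AZ (t^-1) _ Ax); rewrite /=.
        have -> : t^-1 *: x.1 + v = t^-1 *: (x.1 + t *: v).
          have tn0 : t != 0 by rewrite gt_eqF.
          by rewrite scalerDr scalerA mulVf // scale1r.
        rewrite qZ gtr0_norm ?invr_gt0 // -mulrBr => h.
        have := ler_wpM2l (ltW t0) h; rewrite mulrA mulfV ?gt_eqF // mul1r.
        by rewrite mulrC lerBrDl.
  split.
  - by move=> x Ax; exists x, 0; rewrite scale0r mul0r !addr0; case: x Ax.
  - move=> h; apply: nv; exists c.
    apply: h; exists (0, 0), 1; split => //.
    by rewrite scale1r mul1r !add0r.
have [f Hf] := choice total.
exists f; split.
- by move=> a b; apply: (uA (a + b)) => //; exact: (AD (a, f a) (b, f b)).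
- by move=> t a; apply: (uA (t *: a)) => //; exact: (AZ t (a, f a)).
- by move=> v; exact: (Aq (v, f v)).
- by move=> [v r] /G0A Avr; apply: (uA v).
Qed.


Lemma hb_dist (X : lmodType R) (g : X -> V)
  (gD : forall x y, g (x + y) = g x + g y)
  (gZ : forall (t : R) x, g (t *: x) = t *: g x)
  (v0 : V) (h : X -> R) (hE : forall x, h x = q (v0 - g x)) :
  exists f : V -> R, [/\ (forall a b, f (a + b) = f a + f b),
     (forall (t : R) a, f (t *: a) = t * f a),
     (forall v, f v <= q v), (forall x, f (g x) = 0) &
     f v0 = inf [set h x | x in [set: X]]].
Proof.
set d := inf _.
have g0 : g 0 = 0 by rewrite -(scale0r (0 : X)) gZ scale0r.
have d0 : 0 <= d.
  apply: lb_le_inf; first by exists (h 0), 0.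
  by move=> _ [x _ <-]; rewrite hE q_ge0.
have dle x : d <= q (v0 - g x).
  rewrite -hE; apply: ge_inf; last by exists x.
  by exists 0 => _ [y _ <-]; rewrite hE q_ge0.
pose G0 := [set y | exists x (t : R), y = (g x + t *: v0, t * d)].
have gG0 : good G0.
  split.
  - by exists 0, 0; rewrite g0 scale0r mul0r addr0.
  - move=> _ _ [x [t ->]] [y [s ->]]; exists (x + y), (t + s).
    by rewrite /= gD scalerDl mulrDl addrACA.
  - move=> k _ [x [t ->]]; exists (k *: x), (k * t).
    by rewrite /= gZ scalerDr scalerA mulrA.
  - move=> _ [x [t ->]] /=.
    have [->|t0] := eqVneq t 0; first by rewrite mul0r q_ge0.
    have -> : g x + t *: v0 = t *: (v0 - g (- t^-1 *: x)).
      by rewrite gZ scaleNr opprK scalerDr scalerA mulfV // scale1r addrC.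
    rewrite qZ; apply: (@le_trans _ _ (`|t| * d)).
      by rewrite ler_wpM2r // ler_norm.
    by apply: ler_wpM2l => //; exact: dle.
have [f [fD fZ fq fG]] := @hahn_banach G0 gG0.
exists f; split => //.
- move=> x; have H : G0 (g x + 0 *: v0, 0 * d) by exists x, 0.
  by have := fG _ H; rewrite /= scale0r addr0 mul0r.
- have H : G0 (g 0 + 1 *: v0, 1 * d) by exists 0, 1.
  by have := fG _ H; rewrite /= g0 scale1r add0r mul1r.
Qed.

End HahnBanach.

Set Implicit Arguments. Unset Strict Implicit.

Section DualNorm.
Variables (R : realType) (Y : normedModType R).

Definition ballS (l : Y -> R) := [set `|l y| | y in [set y : Y | `|y| <= 1]].

Lemma cont_of_bound (l : {linear Y -> R^o}) c :
  (forall y, `|l y| <= c * `|y|) -> continuous l.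
Proof.
move=> lc; apply: bounded_linear_continuous; apply/bounded_funP => r.
exists (`|c| * r) => x xr; apply: (le_trans (lc x)).
apply: (@le_trans _ _ (`|c| * `|x|)); first by rewrite ler_wpM2r // ler_norm.
by rewrite ler_wpM2l.
Qed.

Lemma dn_bound (l : {linear Y -> R^o}) : continuous l ->
  has_sup (ballS l) /\ forall y, `|l y| <= dual_norm l * `|y|.
Proof.
move=> cl.
have := (linear_boundedP l).1 ((linear_bounded_continuous l).2 cl).
move=> [M [Mr HM]].
have Mlt : M < `|M| + 1 by rewrite (le_lt_trans (ler_norm M)) // ltrDl.
have kH := HM _ Mlt; set k := `|M| + 1 in kH.
have k0 : 0 <= k by rewrite /k addr_ge0.
have hs : has_sup (ballS l).
  split; first by exists `|l 0|, 0 => //=; rewrite normr0.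
  exists k => _ [y /= y1 <-]; apply: (le_trans (kH y)).
  by rewrite -[X in _ <= X]mulr1 ler_wpM2l.
split => // y; have [->|y0] := eqVneq y 0.
  by rewrite linear0 !normr0 mulr0.
have ny0 : 0 < `|y| by rewrite normr_gt0.
have : `|l (`|y|^-1 *: y)| <= dual_norm l.
  apply: (ub_le_sup hs.2); exists (`|y|^-1 *: y) => //=.
  by rewrite normrZ normrV ?unitfE ?normr_eq0 // normr_id mulVf ?gt_eqF.
rewrite linearZ /= normrZ normrV ?unitfE ?normr_eq0 // normr_id.
by rewrite ler_pdivrMl // mulrC.
Qed.

Lemma dn_ge0 (l : {linear Y -> R^o}) : continuous l -> 0 <= dual_norm l.
Proof.
move=> /dn_bound [hs _]; rewrite -(normr0 R) -(linear0 l).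
by apply: (ub_le_sup hs.2); exists 0 => //=; rewrite normr0.
Qed.

Lemma dn_le (l : Y -> R) c : 0 <= c ->
  (forall y, `|l y| <= c * `|y|) -> dual_norm l <= c.
Proof.
move=> c0 lc; apply: ge_sup; first by exists `|l 0|, 0 => //=; rewrite normr0.
move=> _ [y /= y1 <-]; apply: (le_trans (lc y)).
by rewrite -[X in _ <= X]mulr1 ler_wpM2l.
Qed.

Lemma sup_scale (S : set R) s c K : S !=set0 -> 0 <= s ->
  (forall x, S x -> s * x + c <= K) -> s * sup S + c <= K.
Proof.
move=> [x0 Sx0] s0 H; have [se|sn0] := eqVneq s 0.
  by move: (H _ Sx0); rewrite se !mul0r.
have sp : 0 < s by rewrite lt_neqAle eq_sym sn0.
rewrite -lerBrDr mulrC -ler_pdivlMr //; apply: ge_sup; first by exists x0.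
move=> x Sx; rewrite ler_pdivlMr // mulrC lerBrDr; exact: H.
Qed.

End DualNorm.


Lemma conj_exp (R : realType) (p p' : R) : 1 < p -> 1 < p' -> p^-1 + p'^-1 = 1 ->
  (p - 1) * p' = p.
Proof.
move=> p1 p'1 pp'.
have e : p'^-1 = 1 - p^-1 by rewrite -pp' addrAC subrr add0r.
have p0 : p != 0 by rewrite gt_eqF // (lt_trans ltr01).
have p10 : p - 1 != 0 by rewrite subr_eq0 gt_eqF.
by rewrite -[p']invrK e; field; rewrite p0 p10.
Qed.

Section Pow.
Variables (R : realType) (p p' : R).
Hypotheses (p1 : 1 < p) (p'1 : 1 < p') (pp' : p^-1 + p'^-1 = 1).

Definition N2 (a b : R) := (a `^ p + b `^ p) `^ p^-1.

Let p0 : 0 < p. Proof. exact: lt_trans ltr01 p1. Qed.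
Let p'0 : 0 < p'. Proof. exact: lt_trans ltr01 p'1. Qed.

Lemma N2_ge0 a b : 0 <= N2 a b. Proof. exact: powR_ge0. Qed.

Lemma powRK a : 0 <= a -> (a `^ p) `^ p^-1 = a.
Proof. by move=> a0; rewrite -powRrM mulfV ?gt_eqF // powRr1. Qed.

Lemma N2_mono a b a' b' : 0 <= a -> a <= a' -> 0 <= b -> b <= b' ->
  N2 a b <= N2 a' b'.
Proof.
move=> a0 aa b0 bb; apply: ge0_ler_powR; rewrite ?nnegrE.
- by rewrite invr_ge0 ltW.
- by rewrite addr_ge0 // powR_ge0.
- by rewrite addr_ge0 // powR_ge0.
apply: lerD; apply: ge0_ler_powR; rewrite ?nnegrE //; try exact: ltW.
  exact: le_trans aa.
exact: le_trans bb.
Qed.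

Lemma N2_hom t a b : 0 <= t -> 0 <= a -> 0 <= b -> N2 (t * a) (t * b) = t * N2 a b.
Proof.
move=> t0 a0 b0; rewrite /N2 !powRM // -mulrDr powRM ?powR_ge0 ?addr_ge0 //.
rewrite powRK //. all: try exact: powR_ge0. all: try by rewrite addr_ge0 // powR_ge0.
Qed.

Lemma N2_l a : 0 <= a -> N2 a 0 = a.
Proof. by move=> a0; rewrite /N2 powR0 ?gt_eqF // addr0 powRK. Qed.

Lemma N2_r b : 0 <= b -> N2 0 b = b.
Proof. by move=> b0; rewrite /N2 powR0 ?gt_eqF // add0r powRK. Qed.

Lemma powR_split T : 0 <= T -> T = T `^ p^-1 * T `^ p'^-1.
Proof.
move=> T0; rewrite -powRD; last by rewrite pp' oner_eq0.
by rewrite pp' powRr1.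
Qed.

Lemma minkowski2 a1 a2 b1 b2 : 0 <= a1 -> 0 <= a2 -> 0 <= b1 -> 0 <= b2 ->
  N2 (a1 + b1) (a2 + b2) <= N2 a1 a2 + N2 b1 b2.
Proof.
move=> a10 a20 b10 b20.
set c1 := a1 + b1; set c2 := a2 + b2.
have c10 : 0 <= c1 by rewrite addr_ge0.
have c20 : 0 <= c2 by rewrite addr_ge0.
set S := c1 `^ p + c2 `^ p.
have S0 : 0 <= S by rewrite addr_ge0 ?powR_ge0.
have ce : (p - 1) * p' = p by exact: conj_exp.
have hS : forall u1 u2, 0 <= u1 -> 0 <= u2 ->
    u1 * c1 `^ (p - 1) + u2 * c2 `^ (p - 1) <= N2 u1 u2 * S `^ p'^-1.
  move=> u1 u2 u10 u20.
  have := hoelder2 u10 u20 (powR_ge0 c1 (p - 1)) (powR_ge0 c2 (p - 1)) p0 p'0 pp'.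
  by rewrite -!powRrM ce.
have Se : S = (a1 * c1 `^ (p - 1) + a2 * c2 `^ (p - 1)) +
              (b1 * c1 `^ (p - 1) + b2 * c2 `^ (p - 1)).
  rewrite /S -(mulr_powRB1 c10 p0) -(mulr_powRB1 c20 p0) /c1 /c2.
  by rewrite !mulrDl addrACA.
have key : S <= (N2 a1 a2 + N2 b1 b2) * S `^ p'^-1.
  by rewrite {1}Se mulrDl; apply: lerD; apply: hS.
have [Sz|Snz] := eqVneq S 0.
  rewrite /N2 -/S Sz powR0; first by rewrite addr_ge0 // powR_ge0.
  by rewrite invr_eq0 gt_eqF.
have Sp : 0 < S `^ p'^-1 by apply: powR_gt0; rewrite lt_neqAle eq_sym Snz.
move: key; rewrite {1}(@powR_split S S0) ler_pM2r //.
Qed.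

Lemma pw_dual a b : 0 <= a -> 0 <= b ->
  (forall s t, 0 <= s -> 0 <= t -> s * a + t * b <= N2 s t) ->
  (a `^ p' + b `^ p') `^ p'^-1 <= 1.
Proof.
move=> a0 b0 H.
have ce : (p' - 1) * p = p'.
  by apply: conj_exp => //; rewrite addrC.
have := H (a `^ (p' - 1)) (b `^ (p' - 1)) (powR_ge0 _ _) (powR_ge0 _ _).
rewrite /N2 -!powRrM ce mulrC (mulrC (b `^ _)) !mulr_powRB1 //.
set T := a `^ p' + b `^ p' => HT.
have T0 : 0 <= T by rewrite addr_ge0 ?powR_ge0.
have [Tz|Tnz] := eqVneq T 0.
  by rewrite Tz powR0 // invr_eq0 gt_eqF.
have Tp : 0 < T `^ p^-1 by apply: powR_gt0; rewrite lt_neqAle eq_sym Tnz.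
move: HT; rewrite {1}(@powR_split T T0) -{2}(mulr1 (T `^ p^-1)) ler_pM2l //.
Qed.

End Pow.

Set Implicit Arguments. Unset Strict Implicit.

Definition mkl (R : realType) (V : lmodType R) (f : V -> R)
  (H : linear (f : V -> R^o)) : {linear V -> R^o} :=
  HB.pack (f : V -> R^o) (GRing.isLinear.Build R V R^o *:%R f H).

Lemma mklE (R : realType) (V : lmodType R) f H v : @mkl R V f H v = f v.
Proof. by []. Qed.

Lemma lin_of (R : realType) (V : lmodType R) (f : V -> R) :
  (forall a b, f (a + b) = f a + f b) ->
  (forall (t : R) a, f (t *: a) = t * f a) -> linear (f : V -> R^o).
Proof. by move=> fD fZ t a b; rewrite fD fZ. Qed.

Lemma extract (R : realType) (X : lmodType R) (Y Z : normedModType R)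
  (A : {linear X -> Y}) (B : {linear X -> Z}) (k : R) (y0 : Y)
  (q : Y * Z -> R)
  (qD : forall a b, q (a + b) <= q a + q b)
  (qZ : forall (t : R) a, q (t *: a) = `|t| * q a)
  (h : X -> R) (hE : forall x, h x = q ((y0, 0) - (A x, k *: B x))) :
  exists (l : {linear Y -> R^o}) (m : {linear Z -> R^o}),
    [/\ (forall y z, l y + m z <= q (y, z)),
        (forall x, l (A x) + k * m (B x) = 0) &
        l y0 = inf [set h x | x in [set: X]]].
Proof.
pose g (x : X) : Y * Z := (A x, k *: B x).
have gD x y : g (x + y) = g x + g y.
  by rewrite /g; congr (_, _) => /=; rewrite !linearD // scalerDr.
have gZ (t : R) x : g (t *: x) = t *: g x.
  by rewrite /g; congr (_, _) => /=; rewrite !linearZ //= !scalerA mulrC.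
have [f [fD fZ fq fg fv]] := @hb_dist R _ q qD qZ X g gD gZ (y0, 0) h hE.
have fl : linear ((fun y => f (y, 0)) : Y -> R^o).
  apply: lin_of => [a b|t a].
    by rewrite -fD; congr f; congr (_, _); rewrite /= addr0.
  by rewrite -fZ; congr f; congr (_, _); rewrite /= scaler0.
have fm : linear ((fun z => f (0, z)) : Z -> R^o).
  apply: lin_of => [a b|t a].
    by rewrite -fD; congr f; congr (_, _); rewrite /= addr0.
  by rewrite -fZ; congr f; congr (_, _); rewrite /= scaler0.
have pe (y : Y) (z : Z) : ((y, 0) + (0, z) : Y * Z) = (y, z).
  by congr (_, _); [exact: addr0 | exact: add0r].
exists (@mkl R Y _ fl), (@mkl R Z _ fm); split.
- by move=> y z; rewrite !mklE -fD pe fq.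
- move=> x; rewrite !mklE -fZ -fD -[RHS](fg x); congr f.
  by rewrite /g; congr (_, _); rewrite /= ?scaler0 ?addr0 ?add0r.
- by rewrite mklE.
Qed.

Lemma dual_eq (R : realType) (I D : set R) : I !=set0 ->
  (forall r e, D r -> I e -> r <= e) -> D (inf I) -> inf I = sup D.
Proof.
move=> In0 H DI.
have ub : ubound D (inf I) by move=> r Dr; apply: lb_le_inf => // e Ie; exact: H.
apply/eqP; rewrite eq_le; apply/andP; split.
  by apply: ub_le_sup => //; exists (inf I).
by apply: ge_sup => //; exists (inf I).
Qed.

Lemma inf_ge0 (R : realType) (X : Type) (h : X -> R) (x0 : X) :
  (forall x, 0 <= h x) -> 0 <= inf [set h x | x in [set: X]].
Proof. by move=> h0; apply: lb_le_inf; [exists (h x0), x0 | move=> _ [x _ <-]]. Qed.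

Lemma sgn_pick (R : realType) (Y : normedModType R) (l : {linear Y -> R^o}) y :
  exists y', `|y'| = `|y| /\ l y' = `|l y|.
Proof.
have [ly0|ly0] := leP 0 (l y).
  by exists y; rewrite ger0_norm.
by exists (- y); rewrite normrN linearN ltr0_norm.
Qed.


Lemma part1 (R : realType) (X Y Z : completeNormedModType R)
  (A : {linear X -> Y}) (B : {linear X -> Z})
  (hA : continuous A) (hB : continuous B) (y0 : Y) (rho : R) (hrho : 0 < rho) :
  inf [set `|y0 - A x| + rho * `|B x| | x in [set: X]] =
  sup [set r | exists (l : {linear Y -> R^o}) (m : {linear Z -> R^o}),
         [/\ is_dual l, is_dual m,
             Num.max (dual_norm l) (dual_norm m) <= 1,
             (forall x : X, l (A x) + rho * m (B x) = 0) &
             r = `|l y0| ]].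
Proof.
pose q (a : Y * Z) := `|a.1| + `|a.2|.
have qD a b : q (a + b) <= q a + q b.
  by rewrite /q /= addrACA lerD // ler_normD.
have qZ (t : R) a : q (t *: a) = `|t| * q a.
  by rewrite /q /= !normrZ mulrDr.
pose h x := `|y0 - A x| + rho * `|B x|.
have hE x : h x = q ((y0, 0) - (A x, rho *: B x)).
  by rewrite /h /q /= sub0r normrN normrZ gtr0_norm.
have [l [m [lmq lmA ly0]]] := @extract R X Y Z A B rho y0 q qD qZ h hE.
have lb y : `|l y| <= 1 * `|y|.
  rewrite mul1r ler_norml; apply/andP; split.
    have := lmq (- y) 0; rewrite linear0 addr0 linearN /q /= normr0 addr0 normrN.
    by rewrite lerNl.
  by have := lmq y 0; rewrite linear0 addr0 /q /= normr0 addr0.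
have mb z : `|m z| <= 1 * `|z|.
  rewrite mul1r ler_norml; apply/andP; split.
    have := lmq 0 (- z); rewrite linear0 add0r linearN /q /= normr0 add0r normrN.
    by rewrite lerNl.
  by have := lmq 0 z; rewrite linear0 add0r /q /= normr0 add0r.
have h0 x : 0 <= h x by rewrite /h addr_ge0 ?mulr_ge0 // ltW.
apply: dual_eq.
- by exists (h 0), 0.
- move=> _ _ [l' [m' [cl cm Nlm lmA' ->]]] [x _ <-].
  move: Nlm; rewrite ge_max => /andP[Nl Nm].
  have [_ bl] := dn_bound cl; have [_ bm] := dn_bound cm.
  have -> : l' y0 = l' (y0 - A x) - rho * m' (B x).
    by move: (lmA' x); rewrite linearB /=; lra.
  apply: (le_trans (ler_normB _ _)); rewrite normrM gtr0_norm //.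
  rewrite /h; apply: lerD.
    apply: (le_trans (bl _)); rewrite -[X in _ <= X]mul1r ler_wpM2r //.
  apply: ler_wpM2l; first exact: ltW.
  apply: (le_trans (bm _)).
  by rewrite -[X in _ <= X]mul1r ler_wpM2r.
- exists l, m; split.
  + exact: cont_of_bound lb.
  + exact: cont_of_bound mb.
  + by rewrite ge_max !dn_le.
  + exact: lmA.
  + rewrite ly0 ger0_norm; first by [].
    exact: (@inf_ge0 R X h 0 h0).
Qed.


Lemma part2 (R : realType) (X Y Z : completeNormedModType R)
  (A : {linear X -> Y}) (B : {linear X -> Z})
  (hA : continuous A) (hB : continuous B) (y0 : Y) (rho : R) (hrho : 0 < rho) :
  (forall p p' : R, 1 < p -> 1 < p' -> p^-1 + p'^-1 = 1 ->
   inf [set (`|y0 - A x| `^ p + rho * `|B x| `^ p) `^ p^-1 | x in [set: X]] =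
   sup [set r | exists (l : {linear Y -> R^o}) (m : {linear Z -> R^o}),
         [/\ is_dual l, is_dual m,
             (dual_norm l `^ p' + dual_norm m `^ p') `^ p'^-1 <= 1,
             (forall x : X, l (A x) + rho `^ p^-1 * m (B x) = 0) &
             r = `|l y0| ]]).
Proof.
move=> p p' p1 p'1 pp'.
have p0 : 0 < p by exact: lt_trans ltr01 p1.
set c := rho `^ p^-1.
have c0 : 0 < c by apply: powR_gt0.
have cpow b : 0 <= b -> (c * b) `^ p = rho * b `^ p.
  move=> b0; rewrite powRM //; last exact: ltW.
  rewrite /c -powRrM mulVf; last by rewrite gt_eqF.
  by rewrite powRr1 //; exact: ltW.
pose q (a : Y * Z) := N2 p `|a.1| `|a.2|.
have qD a b : q (a + b) <= q a + q b.
  rewrite /q /=; apply: le_trans (minkowski2 p1 p'1 pp' _ _ _ _) => //.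
  by apply: N2_mono => //; apply: ler_normD.
have qZ (t : R) a : q (t *: a) = `|t| * q a.
  by rewrite /q /= !normrZ N2_hom.
pose h x := (`|y0 - A x| `^ p + rho * `|B x| `^ p) `^ p^-1.
have hE x : h x = q ((y0, 0) - (A x, c *: B x)).
  by rewrite /h /q /N2 /= sub0r normrN normrZ gtr0_norm // cpow.
have [l [m [lmq lmA ly0]]] := @extract R X Y Z A B c y0 q qD qZ h hE.
have lb y : `|l y| <= 1 * `|y|.
  rewrite mul1r ler_norml; apply/andP; split.
    have := lmq (- y) 0; rewrite linear0 addr0 linearN /q /= normr0 normrN N2_l //.
    by rewrite lerNl.
  by have := lmq y 0; rewrite linear0 addr0 /q /= normr0 N2_l.
have mb z : `|m z| <= 1 * `|z|.
  rewrite mul1r ler_norml; apply/andP; split.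
    have := lmq 0 (- z); rewrite linear0 add0r linearN /q /= normr0 normrN N2_r //.
    by rewrite lerNl.
  by have := lmq 0 z; rewrite linear0 add0r /q /= normr0 N2_r.
have h0 x : 0 <= h x by exact: powR_ge0.
have cl : continuous l by exact: cont_of_bound lb.
have cm : continuous m by exact: cont_of_bound mb.
apply: dual_eq.
- by exists (h 0), 0.
- move=> _ _ [l' [m' [cl' cm' Nlm lmA' ->]]] [x _ <-].
  have [_ bl] := dn_bound cl'; have [_ bm] := dn_bound cm'.
  have -> : l' y0 = l' (y0 - A x) - c * m' (B x).
    by move: (lmA' x); rewrite linearB /=; lra.
  apply: (le_trans (ler_normB _ _)); rewrite normrM gtr0_norm //.
  apply: (@le_trans _ _ (dual_norm l' * `|y0 - A x| + dual_norm m' * (c * `|B x|))).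
    apply: lerD; first exact: bl.
    rewrite mulrCA; apply: ler_wpM2l; first exact: ltW.
    exact: bm.
  have := hoelder2 (dn_ge0 cl') (dn_ge0 cm') (normr_ge0 (y0 - A x))
    (mulr_ge0 (ltW c0) (normr_ge0 (B x))) (lt_trans ltr01 p'1) p0
    ltac:(by rewrite addrC).
  move/le_trans; apply; rewrite cpow //.
  rewrite -[X in _ <= X]mul1r ler_wpM2r //; exact: powR_ge0.
- exists l, m; split => //.
  + have Nl0 := dn_ge0 cl; have Nm0 := dn_ge0 cm.
    apply: (pw_dual p1 p'1 pp' Nl0 Nm0) => s t s0 t0.
    have ne (W : normedModType R) (f : {linear W -> R^o}) : ballS f !=set0.
      by exists `|f 0|, 0 => //=; rewrite normr0.
    have key y z : `|y| <= 1 -> `|z| <= 1 -> s * `|l y| + t * `|m z| <= N2 p s t.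
      move=> y1 z1.
      have [y' [ny' ly']] := sgn_pick l y; have [z' [nz' mz']] := sgn_pick m z.
      rewrite -ly' -mz' -!linearZ /=.
      apply: (le_trans (lmq _ _)); rewrite /q /= !normrZ !ger0_norm // ny' nz'.
      apply: N2_mono; rewrite ?mulr_ge0 //.
        by rewrite -[X in _ <= X]mulr1 ler_wpM2l.
      by rewrite -[X in _ <= X]mulr1 ler_wpM2l.
    rewrite addrC; apply: sup_scale => //; first exact: ne.
    move=> _ [z /= z1 <-]; rewrite addrC.
    apply: sup_scale => //; first exact: ne.
    by move=> _ [y /= y1 <-]; exact: key.
  + rewrite ly0 ger0_norm; first by [].
    exact: (@inf_ge0 R X h 0 h0).
Qed.

Unset Implicit Arguments. Set Strict Implicit.

Theorem theorem3p4 (R : realType) (X Y Z : completeNormedModType R)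
  (A : {linear X -> Y}) (B : {linear X -> Z})
  (hA : continuous A) (hB : continuous B) (y0 : Y) (rho : R) (hrho : 0 < rho) :
  inf [set `|y0 - A x| + rho * `|B x| | x in [set: X]] =
  sup [set r | exists (l : {linear Y -> R^o}) (m : {linear Z -> R^o}),
         [/\ is_dual l, is_dual m,
             Num.max (dual_norm l) (dual_norm m) <= 1,
             (forall x : X, l (A x) + rho * m (B x) = 0) &
             r = `|l y0| ]]
  /\
  (forall p p' : R, 1 < p -> 1 < p' -> p^-1 + p'^-1 = 1 ->
   inf [set (`|y0 - A x| `^ p + rho * `|B x| `^ p) `^ p^-1 | x in [set: X]] =
   sup [set r | exists (l : {linear Y -> R^o}) (m : {linear Z -> R^o}),
         [/\ is_dual l, is_dual m,
             (dual_norm l `^ p' + dual_norm m `^ p') `^ p'^-1 <= 1,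
             (forall x : X, l (A x) + rho `^ p^-1 * m (B x) = 0) &
             r = `|l y0| ]]).
Proof.
split; first exact: part1.
exact: part2.
Qed.
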